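(* Let $p$ be a prime, let $q$ be a rational number and let $a$ be a positive integer. Then the number of $d \in \{0, \ldots, p-1\}$ such that $$\sum_{i=a}^{a+d} \frac{1}{c_p(i)} \equiv q \pmod p$$ is less than $p^{0.835}$.
   Context: $c_p(1) < c_p(2) < \cdots$ denotes the increasing sequence of all positive integers not divisible by $p$. For rational numbers $x, y$, $x \equiv y \pmod p$ means $\nu_p(x - y) > 0$, where $\nu_p$ is the $p$-adic valuation. *)

(* Defs.v *)
From Stdlib Require Import Reals.
From mathcomp Require Import all_boot all_order all_algebra.
Set Implicit Arguments. Unset Strict Implicit. Unset Printing Implicit Defensive.
Import Order.TTheory GRing.Theory Num.Theory.

(* c_p(i), i >= 1: the i-th element (1-indexed) of the increasing sequence of
   positive integers not divisible by p.  The first i*p positive integers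
   contain at least i such numbers when p >= 2. *)
Definition cp (p i : nat) : nat :=
  nth 0%N [seq n <- iota 1 (i * p) | ~~ (p %| n)%N] i.-1.

(* p-adic valuation of a nonzero rational (numq and denq are coprime). *)
Definition nu_p (p : nat) (r : rat) : int :=
  (Posz (logn p `|numq r|%N) - Posz (logn p `|denq r|%N))%R.

(* x == y (mod p) for rationals: nu_p(x - y) > 0 (with nu_p(0) = +oo). *)
Definition rat_congr (p : nat) (x y : rat) : bool :=
  (x == y) || (0 < nu_p p (x - y))%R.

Definition Hsum (p a d : nat) : rat :=
  (\sum_(a <= i < a + d + 1) ((cp p i)%:R)^-1)%R.

(* Main.v *)
Require Import Defs.
From Stdlib Require Import Reals Lra ZArith Lia.
From mathcomp Require Import all_boot all_order all_algebra.
From mathcomp Require Import zify ring.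
Import GRing.Theory Num.Theory.

Lemma expn_pow m n : (m ^ n)%N = Nat.pow m n.
Proof. elim: n => [|n IH] //=; by rewrite expnS IH /= -multE. Qed.

Section RF.
Lemma real_final (N p : nat) : (1 < p)%N -> (N ^ 6 < p ^ 5)%N ->
  Rlt (INR N) (Rpower (INR p) (Rdiv (IZR 835) (IZR 1000))).
Proof.
Local Open Scope R_scope.
move=> p1 H.
have Hp : (1 < INR p) by apply: (lt_INR 1); apply/ltP.
have lnp : (0 < ln (INR p)) by rewrite -ln_1; apply: ln_increasing; lra.
rewrite /Rpower.
case: N H => [|N] H.
  rewrite /= ; apply: exp_pos.
have HN : (0 < INR N.+1) by apply: lt_0_INR; apply/ltP.
rewrite -{1}(exp_ln (INR N.+1)) //.
apply: exp_increasing.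
have H2 : (INR N.+1 ^ 6 < INR p ^ 5).
  rewrite -!pow_INR; apply: lt_INR; rewrite -!expn_pow; exact/ltP.
have H3 : (ln (INR N.+1 ^ 6) < ln (INR p ^ 5)).
  apply: ln_increasing => //; apply: pow_lt; lra.
rewrite !ln_pow in H3; try lra.
have E6 : INR 6 = 6 by simpl; lra.
have E5 : INR 5 = 5 by simpl; lra.
rewrite E6 E5 in H3; lra.
Qed.
End RF.


Lemma leq_pexp2r e m n : m <= n -> m ^ e <= n ^ e.
Proof. move=> h; elim: e => [|e IH] //; by rewrite !expnS leq_mul. Qed.

Arguments leq_pexp2r e {m n}.
Definition Bnd (p G : nat) : nat := G + 'C(G, 2) + (p.-1) %/ G.+1.
Definition Gc (p : nat) : nat := (count (fun h => h ^ 3 <= p) (iota 2 4)).+1.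
Definition chk (p : nat) : bool :=
  Z.ltb (Z.pow (Z.of_nat (Bnd p (Gc p))) (Z.of_nat 6)) (Z.pow (Z.of_nat p) (Z.of_nat 5)).

Lemma chk_all : all chk (iota 2 214).
Proof. vm_compute. reflexivity. Qed.

Lemma cube_root p : exists H, H ^ 3 <= p < H.+1 ^ 3.
Proof.
elim: p => [|p [H /andP[h1 h2]]]; first by exists 0.
case: (ltnP p.+1 (H.+1 ^ 3)) => h3.
  by exists H; rewrite h3 (leq_trans h1).
exists H.+1; rewrite h3 /=.
apply: (leq_ltn_trans h2); rewrite ltn_exp2r //.
Qed.

Lemma bin2_2 n : 'C(n, 2) * 2 = n * n.-1.
Proof. by rewrite -[2]/(2`!) bin_ffact ffactnS ffactn1. Qed.

Lemma arith p : 1 < p -> exists2 G, 0 < G & Bnd p G ^ 6 < p ^ 5.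
Proof.
move=> p1.
have [H /andP[h1 h2]] := cube_root p.
case: (leqP 6 H) => H6.
  exists H; first by lia.
  have hX : p.-1 %/ H.+1 < H.+1 ^ 2.
    rewrite ltn_divLR //. rewrite -expnSr. lia.
  have hC := bin2_2 H.
  have hB : Bnd p H <= 2 * H ^ 2.
    rewrite /Bnd. rewrite !expnS expn0 in hX *. nia.
  apply: (leq_ltn_trans (leq_pexp2r 6 hB)).
  rewrite expnMn -expnM.
  have h64 : 2 ^ 6 < H ^ 3.
    apply: (leq_trans _ (leq_pexp2r 3 H6)); by [].
  apply: (leq_trans (n := H ^ 3 * H ^ (2 * 6))).
    by rewrite ltn_pmul2r // expn_gt0; lia.
  rewrite -expnD. apply: (leq_trans _ (leq_pexp2r 5 h1)). by rewrite -expnM.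
have p216 : p < 216.
  apply: (leq_trans h2); rewrite -[216]/(6 ^ 3); exact: leq_pexp2r.
exists (Gc p) => //.
have : chk p.
  move/allP: chk_all; apply; rewrite mem_iota; lia.
rewrite /chk => /Z.ltb_lt.
rewrite -!Znat.Nat2Z.inj_pow -!expn_pow => /Znat.Nat2Z.inj_lt /ltP.
done.
Qed.

Section CP.
Variable p : nat.
Hypothesis p1 : 1 < p.

Let f K := [seq n <- iota 1 (K * p) | ~~ (p %| n)].

Lemma f_succ K : f K.+1 = f K ++ [seq K * p + j | j <- iota 1 p.-1].
Proof.
rewrite /f mulSnr iotaD filter_cat; congr (_ ++ _).
have E : iota (1 + K * p) p = iota (1 + K * p) p.-1 ++ iota (1 + K * p + p.-1) 1.
  by rewrite -iotaD; congr iota; lia.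
rewrite E filter_cat.
have -> : [seq n <- iota (1 + K * p + p.-1) 1 | ~~ (p %| n)] = [::].
  have hd : p %| 1 + K * p + p.-1.
    have -> : 1 + K * p + p.-1 = K.+1 * p by lia.
    exact: dvdn_mull.
  by rewrite /= hd.
rewrite cats0 [1 + _]addnC iotaDl; apply/all_filterP/allP => x /mapP[j]; rewrite mem_iota => hj ->.
rewrite dvdn_addr ?dvdn_mull //.
apply/negP => /(dvdn_leq _); lia.
Qed.

Lemma size_f K : size (f K) = K * p.-1.
Proof.
elim: K => [|K IH]; first by rewrite /f mul0n.
by rewrite f_succ size_cat size_map size_iota IH mulSnr.
Qed.

Lemma nth_f K k j : k < K -> j < p.-1 -> nth 0 (f K) (k * p.-1 + j) = k * p + j.+1.
Proof.
elim: K => [|K IH] // hk hj.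
rewrite f_succ nth_cat size_f.
case: (ltnP k K) => hkK.
  rewrite ifT; last by nia.
  exact: IH.
have -> : k = K by lia.
rewrite ltnNge leq_addr /= addKn (nth_map 0) ?size_iota // nth_iota //.
Qed.

Lemma cp_eq i : 0 < i -> cp p i = (i.-1 %/ p.-1) * p + (i.-1 %% p.-1).+1.
Proof.
move=> i0; rewrite /cp.
have hp : 0 < p.-1 by lia.
rewrite {1}(divn_eq i.-1 p.-1) nth_f //; last by rewrite ltn_mod.
apply: (leq_ltn_trans (leq_div _ _)); lia.
Qed.

End CP.
Local Open Scope ring_scope.

Section Rep.
Variable p : nat.
Hypothesis pp : prime p.

Definition rep (r : rat) (t : 'F_p) := exists u v : int,
  (v%:~R : 'F_p) != 0 /\ r = u%:~R / v%:~R /\ t = u%:~R / v%:~R.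

Lemma vnz {v : int} : (v%:~R : 'F_p) != 0 -> (v%:~R : rat) != 0.
Proof. by apply: contra; rewrite intr_eq0 => /eqP ->. Qed.

Lemma rep_add {r1 r2 t1 t2} : rep r1 t1 -> rep r2 t2 -> rep (r1 + r2) (t1 + t2).
Proof.
move=> [u1 [v1 [h1 [-> ->]]]] [u2 [v2 [h2 [-> ->]]]].
exists (u1 * v2 + u2 * v1), (v1 * v2); split; first by rewrite rmorphM mulf_neq0.
have h1' := vnz h1; have h2' := vnz h2.
split; rewrite !rmorphD !rmorphM /=; field; by rewrite ?h1 ?h2 ?h1' ?h2'.
Qed.

Lemma rep_opp {r t} : rep r t -> rep (- r) (- t).
Proof.
move=> [u [v [h [-> ->]]]]; exists (- u), v; split => //.
by rewrite !rmorphN !mulNr.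
Qed.

Lemma rep_uniq r t1 t2 : rep r t1 -> rep r t2 -> t1 = t2.
Proof.
move=> [u1 [v1 [h1 [-> ->]]]] [u2 [v2 [h2 [e ->]]]].
have h1' := vnz h1; have h2' := vnz h2.
have E : u1 * v2 = u2 * v1.
  apply: (@intr_inj rat); rewrite !rmorphM /=.
  by apply/eqP; rewrite -eqr_div // e.
apply/eqP; rewrite eqr_div // -!rmorphM E //.
Qed.

Lemma rep_sub r1 r2 t1 t2 : rep r1 t1 -> rep r2 t2 -> rep (r1 - r2) (t1 - t2).
Proof. move=> h1 h2; exact: (rep_add h1 (rep_opp h2)). Qed.

Lemma rep_inv (c : nat) : (c%:R : 'F_p) != 0 -> rep (c%:R^-1) (c%:R^-1).
Proof.
move=> h; exists 1, (Posz c); split => //.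
by rewrite !mul1r.
Qed.

Lemma rep_sum (I : Type) (s : seq I) (P : pred I) (F1 : I -> rat) (F2 : I -> 'F_p) :
  (forall i, P i -> rep (F1 i) (F2 i)) ->
  rep (\sum_(i <- s | P i) F1 i) (\sum_(i <- s | P i) F2 i).
Proof.
move=> h; apply: (big_ind2 rep).
- by exists 0, 1; rewrite !mul0r.
- by move=> ? ? ? ?; apply: rep_add.
- exact: h.
Qed.

Lemma rep_congr x y : rat_congr p x y -> rep (x - y) 0.
Proof.
rewrite /rat_congr => /orP[/eqP ->|].
  by rewrite subrr; exists 0, 1; rewrite !mul0r.
set r := x - y; rewrite /nu_p => hlt.
have hc := coprime_num_den r.
have hn : (p %| `|numq r|)%N.
  have : (0 < logn p `|numq r|)%N.
    move: hlt; rewrite subr_gt0 ltz_nat; lia.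
  by rewrite logn_gt0 mem_primes => /and3P[].
have hd : ~~ (p %| `|denq r|)%N.
  apply/negP => hd.
  have : (p %| gcdn `|numq r| `|denq r|)%N by rewrite dvdn_gcd hn hd.
  rewrite (eqP hc) dvdn1 => /eqP p1.
  by move: pp; rewrite p1.
have cp := pchar_Fp pp.
exists (numq r), (denq r); split; last split.
- by rewrite -(dvdz_pcharf cp).
- by rewrite divq_num_den.
- have -> : ((numq r)%:~R : 'F_p) = 0 by apply/eqP; rewrite -(dvdz_pcharf cp).
  by rewrite mul0r.
Qed.
End Rep.

Section Poly.
Variable R : fieldType.

Lemma deriv_prod (s : seq R) (z : R) : (forall x, x \in s -> z - x != 0) ->
  (\prod_(x <- s) ('X - x%:P))^`().[z] =
  (\prod_(x <- s) ('X - x%:P)).[z] * \sum_(x <- s) (z - x)^-1.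
Proof.
elim: s => [|x s IH] hs.
  by rewrite !big_nil derivC hornerC mulr0.
have hx : z - x != 0 by apply: hs; rewrite mem_head.
have hs' : forall y, y \in s -> z - y != 0 by move=> y hy; apply: hs; rewrite inE hy orbT.
rewrite !big_cons derivM derivB derivX derivC subr0 mul1r hornerD !hornerM hornerXsubC IH //.
have key : forall A B : R, A + (z - x) * A * B = (z - x) * A * ((z - x)^-1 + B).
  by move=> A B; field.
by field.
Qed.

Lemma deriv_prod_size (s : seq R) :
  (size s)%:R != 0 :> R ->
  (\prod_(x <- s) ('X - x%:P))^`() != 0 /\
  (size (\prod_(x <- s) ('X - x%:P))^`() <= size s)%N.
Proof.
move=> hn.
set P := \prod_(x <- s) ('X - x%:P).
have mP : P \is monic by apply: monic_prod_XsubC.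
have sP : size P = (size s).+1 by apply: size_prod_XsubC.
have P0 : P != 0 by apply: monic_neq0.
split; last by rewrite -ltnS -sP lt_size_deriv.
have ss : (0 < size s)%N by move: hn; case: (size s) => //; rewrite eqxx.
apply/eqP => hQ.
have := coef_deriv P (size s).-1.
rewrite hQ coef0 prednK //.
have -> : P`_(size s) = 1.
  by move/monicP: mP; rewrite /lead_coef sP.
by move=> h; move: hn; rewrite -h eqxx.
Qed.

End Poly.
Section Count.
Variables (p a : nat).
Hypotheses (pp : prime p) (a0 : (0 < a)%N).

Let p1 : (1 < p)%N. Proof. exact: prime_gt1. Qed.

Lemma natF_neq0 n : (0 < n < p)%N -> (n%:R : 'F_p) != 0.
Proof.
move=> /andP[h1 h2]; rewrite -(dvdn_pcharf (pchar_Fp pp)).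
by apply/negP => /(dvdn_leq h1); rewrite leqNgt h2.
Qed.

Lemma natF_inj m n : (m < p)%N -> (n < p)%N -> (m%:R : 'F_p) = n%:R -> m = n.
Proof.
wlog hmn : m n / (m <= n)%N.
  move=> W hm hn e; case: (leqP m n) => h; first exact: W.
  by apply/esym/W => //; apply: ltnW.
move=> hm hn e.
have : ((n - m)%:R : 'F_p) = 0 by rewrite natrB // e subrr.
move/eqP; rewrite -(dvdn_pcharf (pchar_Fp pp)).
case: (posnP (n - m)) => [h|h]; first by move=> _; lia.
by move/(dvdn_leq h) => h'; lia.
Qed.

Definition y i : 'F_p := (cp p i)%:R.

Lemma y_eq i : (0 < i)%N -> y i = ((i.-1 %% p.-1).+1)%:R.
Proof.
move=> i0; rewrite /y cp_eq // natrD natrM pchar_Fp_0 // mulr0 add0r //.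
Qed.

Lemma y_neq0 i : (0 < i)%N -> y i != 0.
Proof.
move=> i0; rewrite y_eq //; apply: natF_neq0.
have : (i.-1 %% p.-1 < p.-1)%N by rewrite ltn_mod; lia.
lia.
Qed.

Definition F (d : nat) : 'F_p := \sum_(a <= i < a + d + 1) (y i)^-1.

Lemma F_add d g : F (d + g) = F d + \sum_(i <- iota (a + d + 1) g) (y i)^-1.
Proof.
rewrite /F (big_cat_nat (n := a + d + 1)); [|lia|lia].
congr (_ + _); rewrite /index_iota.
by have -> : (a + (d + g) + 1 - (a + d + 1) = g)%N by lia.
Qed.

Definition r d := ((a + d) %% p.-1)%N.

Lemma r_lt d : (r d < p.-1)%N.
Proof. rewrite /r ltn_mod; lia. Qed.

Lemma r_inj d1 d2 : (d1 < p.-1)%N -> (d2 < p.-1)%N -> r d1 = r d2 -> d1 = d2.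
Proof.
move=> h1 h2 /eqP; rewrite /r eqn_modDl !modn_small //.
by move/eqP.
Qed.

Definition xs g : seq 'F_p := [seq - (k.+1)%:R | k <- iota 0 g].

Lemma clean_sum d g : (r d + g <= p.-1)%N ->
  \sum_(i <- iota (a + d + 1) g) (y i)^-1 = \sum_(x <- xs g) ((r d)%:R - x)^-1.
Proof.
move=> h.
rewrite -[(a + d + 1)%N]addn0 iotaDl !big_map; apply: eq_big_seq => k.
rewrite mem_iota add0n => hk.
rewrite y_eq; last by lia.
rewrite opprK -natrD; congr ((_)%:R^-1).
have -> : ((a + d + 1 + k).-1 = (a + d) + k)%N by lia.
rewrite -modnDml -/(r d) modn_small; lia.
Qed.

Definition Q g := (\prod_(x <- xs g) ('X - x%:P))^`().

Lemma clean_root d g : (r d + g <= p.-1)%N -> F (d + g) = F d ->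
  root (Q g) ((r d)%:R).
Proof.
move=> h e.
have hs : \sum_(x <- xs g) ((r d)%:R - x)^-1 = 0.
  rewrite -clean_sum //.
  have := F_add d g; rewrite e => /(congr1 (fun z => z - F d)) /=.
  by rewrite subrr [F d + _]addrC addrK => <-.
rewrite /root /Q deriv_prod ?hs ?mulr0 //.
move=> x /mapP[k]; rewrite mem_iota add0n => hk ->.
rewrite opprK -natrD; apply: natF_neq0; lia.
Qed.

Lemma card_nat_bound (T : finType) (A : {set T}) (f : T -> nat) n :
  {in A &, injective f} -> (forall x, x \in A -> (f x < n)%N) -> (#|A| <= n)%N.
Proof.
move=> inj hb.
have -> : #|A| = size (map f (enum A)) by rewrite size_map cardE.
rewrite -(size_iota 0 n); apply: uniq_leq_size.
  rewrite map_inj_in_uniq ?enum_uniq //.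
  by move=> x1 x2; rewrite !mem_enum; apply: inj.
move=> z /mapP[x]; rewrite mem_enum => hx ->; rewrite mem_iota add0n hb //.
Qed.

Lemma clean_card g (A : {set 'I_p}) : (0 < g)%N ->
  (forall d : 'I_p, d \in A -> [/\ (d < p.-1)%N, (r d + g <= p.-1)%N & F (d + g) = F d]) ->
  (#|A| <= g.-1)%N.
Proof.
move=> g0 hA.
case: (set_0Vmem A) => [->|[d0 hd0]]; first by rewrite cards0.
have gp : (g < p)%N by have [_ h _] := hA _ hd0; lia.
have [Q0 sQ] : Q g != 0 /\ (size (Q g) <= size (xs g))%N.
  apply: deriv_prod_size; rewrite size_map size_iota; apply: natF_neq0; lia.
rewrite size_map size_iota in sQ.
have -> : #|A| = size (map (fun d : 'I_p => ((r d)%:R : 'F_p)) (enum A)).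
  by rewrite size_map cardE.
have : (size (map (fun d : 'I_p => ((r d)%:R : 'F_p)) (enum A)) < size (Q g))%N.
  apply: max_poly_roots => //.
    apply/allP => z /mapP[d]; rewrite mem_enum => hd ->.
    by have [_ h1 h2] := hA _ hd; apply: clean_root.
  rewrite map_inj_in_uniq ?enum_uniq //.
  move=> d1 d2; rewrite !mem_enum => h1 h2 e.
  have [l1 _ _] := hA _ h1; have [l2 _ _] := hA _ h2.
  apply: ord_inj; apply: r_inj => //; apply: natF_inj => //.
  - by apply: (ltn_trans (r_lt d1)); have := p1; lia.
  - by apply: (ltn_trans (r_lt d2)); have := p1; lia.
lia.
Qed.

Lemma card_bigcup_ord (T : finType) n (A : nat -> {set T}) :
  (#|\bigcup_(i < n) A i| <= \sum_(i < n) #|A i|)%N.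
Proof.
elim: n => [|n IH]; first by rewrite !big_ord0 cards0.
rewrite !big_ord_recr /=.
apply: (leq_trans (leq_card_setU _ _)); exact: leq_add.
Qed.

Lemma count_bound G t : (0 < G)%N ->
  (#|[set d : 'I_p | F d == t]| <= G + 'C(G, 2) + p.-1 %/ G.+1)%N.
Proof.
move=> G0.
set S := [set d : 'I_p | F d == t].
set B1 := [set d : 'I_p | [exists e : 'I_p, (e \in S) && (d < e <= d + G)%N]].
rewrite -(cardsID B1 S).
set Cross := [set d : 'I_p | (d < p.-1)%N && (p - G <= r d)%N].
set Cl := fun g => [set d : 'I_p | [&& (d < p.-1)%N, (r d + g <= p.-1)%N & F (d + g) == F d]].
set U := \bigcup_(g < G) Cl g.+1.
have h2 : (#|S :\: B1| <= p.-1 %/ G.+1 + 1)%N.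
  apply: (@card_nat_bound _ _ (fun d : 'I_p => (d %/ G.+1)%N)).
    move=> d1 d2 /setDP[s1 n1] /setDP[s2 n2] e.
    apply: ord_inj.
    have key : forall e1 e2 : 'I_p, e2 \in S -> e1 \notin B1 -> (e1 < e2)%N ->
        (e1 %/ G.+1 = e2 %/ G.+1)%N -> False.
      move=> e1 e2 hs2 hn1 hlt he.
      move/negP: hn1; apply; rewrite inE; apply/existsP; exists e2; rewrite hs2 hlt /=.
      have E1 := divn_eq e1 G.+1; have E2 := divn_eq e2 G.+1.
      have M2 : (e2 %% G.+1 < G.+1)%N by rewrite ltn_mod.
      rewrite he in E1.
      move: E1 E2 M2; set qq := (_ %/ _ * _)%N; lia.
    case: (ltngtP d1 d2) => // h; first by case: (key d1 d2 s2 n1 h e).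
    by case: (key d2 d1 s1 n2 h (esym e)).
  move=> d _; rewrite addn1 ltnS leq_div2r //; have := ltn_ord d; lia.
have hC : (#|Cross| <= G.-1)%N.
  apply: (@card_nat_bound _ _ (fun d : 'I_p => (r d - (p - G))%N)).
    move=> d1 d2; rewrite !inE => /andP[l1 c1] /andP[l2 c2] e.
    apply: ord_inj; apply: r_inj => //; lia.
  move=> d; rewrite inE => /andP[l1 c1]; have := r_lt d; lia.
have hU : (#|U| <= 'C(G, 2))%N.
  apply: (leq_trans (@card_bigcup_ord _ G (fun i => Cl i.+1))).
  rewrite -bin2_sum big_mkord; apply: leq_sum => g _.
  apply: (@clean_card g.+1) => // d; rewrite inE => /and3P[h1 h3 /eqP h4].
  by split.
have hsub : S :&: B1 \subset Cross :|: U.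
  apply/subsetP => d; rewrite !inE => /andP[hS /existsP[e /andP[he /andP[hde heG]]]].
  have eq : F e = F d by move: hS he; rewrite !inE => /eqP -> /eqP ->.
  set g := (e - d)%N.
  have ed : nat_of_ord e = (d + g)%N by rewrite /g; lia.
  have dp : (d < p.-1)%N by have := ltn_ord e; lia.
  case: (leqP (r d + g) p.-1) => hc.
    apply/orP; right; apply/bigcupP.
    have gG : (g.-1 < G)%N by rewrite /g; lia.
    exists (Ordinal gG) => //=.
    rewrite inE dp /= prednK; last by rewrite /g; lia.
    by rewrite hc -ed eq eqxx.
  apply/orP; left; rewrite dp /=; rewrite /g in hc; lia.
have h1 : (#|S :&: B1| <= G.-1 + 'C(G, 2))%N.
  apply: (leq_trans (subset_leq_card hsub)).
  apply: (leq_trans (leq_card_setU _ _)); exact: leq_add.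
lia.
Qed.

End Count.
Arguments y_neq0 {p a}. Arguments count_bound {p a}. Arguments rep_sub {p r1 r2 t1 t2}. Arguments rep_uniq {p r t1 t2}.
Close Scope ring_scope.
Theorem lemma3p4 (p : nat) (q : rat) (a : nat) :
  prime p -> (0 < a)%N ->
  Rlt (INR #|[set d : 'I_p | rat_congr p (Hsum p a d) q]|)
      (Rpower (INR p) (Rdiv (IZR 835) (IZR 1000))).
Proof.
move=> pp a0.
have p1 := prime_gt1 pp.
have [G G0 hG] := arith p p1.
apply: real_final => //.
set D := [set d : 'I_p | _].
suff hD : (#|D| <= Bnd p G)%N.
  apply: leq_ltn_trans hG; exact: leq_pexp2r.
have hrep : forall d : nat, rep p (Hsum p a d) (F p a d).
  move=> d; rewrite /Hsum /F big_nat_cond [in X in rep _ _ X]big_nat_cond.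
  apply: rep_sum => i /andP[/andP[hi _] _].
  apply: rep_inv => //. exact: (y_neq0 pp a0 _ (leq_trans a0 hi)).
have hq : forall d : 'I_p, d \in D -> rep p q (F p a d).
  move=> d; rewrite inE => /(rep_congr p pp) h.
  have := rep_sub (hrep d) h.
  by rewrite opprB addrC subrK subr0.
case: (set_0Vmem D) => [->|[d0 hd0]]; first by rewrite cards0.
apply: (leq_trans _ (count_bound pp a0 G (F p a d0) G0)).
apply: subset_leq_card; apply/subsetP => d hd; rewrite inE; apply/eqP.
exact: (rep_uniq (hq d hd) (hq d0 hd0)).
Qed.
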